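(* Consider the algorithm CCom described in the context. Then the fraction of bad IDs in the system is always at most $1/2$.
   Context: Model. IDs are good (follow the algorithm) or bad (controlled by a single adversary, which schedules joins and departures). The adversary controls at most an $\alpha\le1/6$ fraction of total computational power. Good IDs announce their departures; bad IDs need not. A committee (assumed to have a good majority and to act correctly via Byzantine consensus) runs the algorithm. Algorithm CCom. The committee maintains $\mathcal S_{\mathrm{old}}$ (IDs present after the most recent purge) and $\mathcal S$ (current IDs: joining IDs are added after solving an entrance puzzle, announced departures are removed). Whenever $|(\mathcal S\cup\mathcal S_{\mathrm{old}})\setminus(\mathcal S\cap\mathcal S_{\mathrm{old}})|\ge|\mathcal S_{\mathrm{old}}|/3$, a purge occurs: a fresh random string is broadcast and every ID must return within one round a solution to a $1$-round computational puzzle whose inputs include its public key and that string; IDs failing to do so are removed, and $\mathcal S_{\mathrm{old}},\mathcal S$ are reset to the IDs returning valid solutions. Epochs are the periods between consecutive purges. Initially fewer than a third of the IDs are bad, and at the end of every epoch the number of bad IDs is less than a third of all IDs. *)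

(* Defs.v *)
From mathcomp Require Import all_boot.
Set Implicit Arguments. Unset Strict Implicit. Unset Printing Implicit Defensive.

(* Identifiers range over a finite type [T] (the IDs that ever appear in an
   execution); [bad x] means that ID [x] is controlled by the adversary.
   A committee state is the pair (S_old, S). *)

Definition symdiff (T : finType) (A B : {set T}) : {set T} :=
  (A :|: B) :\: (A :&: B).

Definition purge_due (T : finType) (Sold S : {set T}) : bool :=
  #|Sold| <= 3 * #|symdiff S Sold|.

Definition less_than_third_bad (T : finType) (bad : pred T) (A : {set T}) : Prop :=
  3 * #|[set x in A | bad x]| < #|A|.

(* Joins (after the entrance puzzle) add an ID to S;
   announced departures remove an ID from S (good IDs always announce; a bad ID
   leaving silently simply stays in S, i.e. no step).  Whenever the purge
   condition holds, the next step is a purge: S_old and S are reset to the set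
   S' of current IDs that returned valid puzzle solutions, and (standing
   assumption) fewer than a third of these are bad. *)
Inductive ccom_step (T : finType) (bad : pred T) :
  {set T} * {set T} -> {set T} * {set T} -> Prop :=
| ccom_join (Sold S : {set T}) (x : T) :
    ~~ purge_due Sold S -> x \notin S -> ccom_step bad (Sold, S) (Sold, x |: S)
| ccom_depart (Sold S : {set T}) (x : T) :
    ~~ purge_due Sold S -> x \in S -> ccom_step bad (Sold, S) (Sold, S :\ x)
| ccom_purge (Sold S S' : {set T}) :
    purge_due Sold S -> S' \subset S -> less_than_third_bad bad S' ->
    ccom_step bad (Sold, S) (S', S').

Inductive ccom_reachable (T : finType) (bad : pred T) : {set T} * {set T} -> Prop :=
| ccom_init (S0 : {set T}) : less_than_third_bad bad S0 -> ccom_reachable bad (S0, S0)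
| ccom_next st st' : ccom_reachable bad st -> ccom_step bad st st' ->
    ccom_reachable bad st'.

(* Main.v *)
Require Import Defs.
From mathcomp Require Import all_boot.
From mathcomp Require Import zify.
Set Implicit Arguments.

Definition inv (T : finType) (bad : pred T) (st : {set T} * {set T}) : Prop :=
  3 * #|[set x in st.1 | bad x]| < #|st.1| /\
  3 * #|symdiff st.2 st.1| <= #|st.1| + 2.

Lemma card_add1 (T : finType) (x : T) (A B : {set T}) :
  A \subset x |: B -> #|A| <= #|B| + 1.
Proof.
move=> /subset_leq_card H; apply: (leq_trans H).
rewrite cardsU1; case: (x \in B) => /=; lia.
Qed.

Lemma inv_reach (T : finType) (bad : pred T) st :
  ccom_reachable bad st -> inv bad st.
Proof.
elim=> [S0 H|st0 st' _ [IH1 IH2] stp].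
  split=> //=. rewrite /symdiff setUid setIid setDv cards0; lia.
case: stp IH1 IH2 => /=.
- move=> Sold S x nd _ H1 H2; split=> //=.
  move: nd; rewrite /purge_due -ltnNge => nd.
  have: #|symdiff (x |: S) Sold| <= #|symdiff S Sold| + 1.
    apply: (@card_add1 _ x); apply/subsetP=> y.
    rewrite /symdiff !inE; by case: (y == x); case: (y \in S); case: (y \in Sold).
  lia.
- move=> Sold S x nd _ H1 H2; split=> //=.
  move: nd; rewrite /purge_due -ltnNge => nd.
  have: #|symdiff (S :\ x) Sold| <= #|symdiff S Sold| + 1.
    apply: (@card_add1 _ x); apply/subsetP=> y.
    rewrite /symdiff !inE; by case: (y == x); case: (y \in S); case: (y \in Sold).
  lia.
- move=> Sold S S' _ _ H _ _; split=> //=.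
  rewrite /symdiff setUid setIid setDv cards0; lia.
Qed.

Theorem lemma3 (T : finType) (bad : pred T) (Sold S : {set T}) :
  ccom_reachable bad (Sold, S) ->
  2 * #|[set x in S | bad x]| <= #|S|.
Proof.
move=> /inv_reach [/= H1 H2].
have Hsub : [set x in S | bad x] \subset [set x in Sold | bad x] :|: (S :\: Sold).
  apply/subsetP=> y; rewrite !inE; case: (y \in Sold); case: (y \in S); case: (bad y) => //.
have Hb := subset_leq_card Hsub.
have HU := cardsU [set x in Sold | bad x] (S :\: Sold).
have HD := cardsD S Sold.
have HUI := cardsUI S Sold.
have Hsd : #|symdiff S Sold| = #|S :|: Sold| - #|S :&: Sold|.
  by rewrite /symdiff cardsD (setIidPr _) // subIset // subsetUl.
have Hi1 : #|S :&: Sold| <= #|S| by apply: subset_leq_card; apply: subsetIl.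
have Hi2 : #|S :&: Sold| <= #|Sold| by apply: subset_leq_card; apply: subsetIr.
lia.
Qed.
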